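(* For the finite-alphabet channel $P_{Y|X_1,X_2}$ and metric $q$, $\mathcal R_{LM}\subseteq\mathcal R^{bin}_{cog}$, where $\mathcal R_{LM}$ is the closure of the convex hull of the union over $P_{X_1},P_{X_2}$ of the sets of $(R_1,R_2)$ satisfying $R_1<\min_{f\in\mathcal D_{(1)}}[I_f(X_1;Y|X_2)+I_f(X_1;X_2)]$, $R_2<\min_{f\in\mathcal D_{(2)}}[I_f(X_2;Y|X_1)+I_f(X_1;X_2)]$, $R_1+R_2<\min_{f\in\mathcal D_{(0)}}[I_f(X_1,X_2;Y)+I_f(X_1;X_2)]$, with $P_{X_1,X_2,Y}=P_{X_1}P_{X_2}P_{Y|X_1,X_2}$ and $\mathcal D_{(1)}=\{f: f_{X_1}=P_{X_1}, f_{X_2,Y}=P_{X_2,Y},\mathbb E_f q\ge\mathbb E_P q\}$, $\mathcal D_{(2)}=\{f: f_{X_2}=P_{X_2}, f_{X_1,Y}=P_{X_1,Y},\mathbb E_f q\ge\mathbb E_P q\}$, $\mathcal D_{(0)}=\{f: f_{X_1}=P_{X_1}, f_{X_2}=P_{X_2}, f_Y=P_Y,\mathbb E_f q\ge\mathbb E_P q, I_f(X_1;Y)\le R_1, I_f(X_2;Y)\le R_2\}$; and $\mathcal R^{bin}_{cog}$ is the closure of the convex hull of $\bigcup_P\mathcal R^{bin,*}_{cog}(P)$ over all $P=P_{X_1,X_2}P_{Y|X_1,X_2}$, $\mathcal R^{bin,*}_{cog}(P)$ being the set of $(R_1,R_2)$ for which there exist $R_{1,a},R_{1,b}\ge0$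 with $R_1=R_{1,a}+R_{1,b}$, $R_{1,a}\le R_1'(P)$, $R_{1,b}+R_2\le R_2'(P)$, and either $R_{1,a}\le R_1''(P,R_{1,b}+R_2)$ or $R_{1,b}+R_2\le R_2''(P,R_{1,a})$.
   Context: All distributions $f$ are on $\mathcal X_1\times\mathcal X_2\times\mathcal Y$ (finite), $q:\mathcal X_1\times\mathcal X_2\times\mathcal Y\to\mathbb R$, expectations $\mathbb E_f q=\mathbb E_f q(X_1,X_2,Y)$. For a distribution $Q$: $\mathcal G_q(Q)=\{f: f_{X_1,X_2}=Q_{X_1,X_2},\ \mathbb E_f q\ge\mathbb E_Q q\}$; $\mathcal L_1(Q)=\{f\in\mathcal G_q(Q):f_{X_2,Y}=Q_{X_2,Y}\}$; $\mathcal L_2(Q)=\{f\in\mathcal G_q(Q):f_{X_1,Y}=Q_{X_1,Y}\}$; $\mathcal L_0(Q)=\{f\in\mathcal G_q(Q):f_Y=Q_Y\}$. $R_1'(P)=\min_{\tilde P\in\mathcal L_1(P)}I_{\tilde P}(X_1;Y,X_2)$; $R_2'(P)=\min_{\tilde P\in\mathcal L_2(P)}I_{\tilde P}(X_2;Y|X_1)$; $R_1''(P,R_2)=\min_{\tilde P\in\mathcal L_0(P)}[I_{\tilde P}(X_1;Y)+|I_{\tilde P}(X_2;Y|X_1)-R_2|^+]$; $R_2''(P,R_1)=\min_{\tilde P\in\mathcal L_0(P)}[I_{\tilde P}(X_2;Y)-I_{\tilde P}(X_2;X_1)+|I_{\tilde P}(X_1;Y,X_2)-R_1|^+]$; $|t|^+=\max\{0,t\}$.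 *)

(* Defs.v *)
From HB Require Import structures.
From mathcomp Require Import all_boot all_order all_algebra.
From mathcomp Require Import all_classical all_reals all_analysis.
Set Implicit Arguments. Unset Strict Implicit. Unset Printing Implicit Defensive.
Import Order.TTheory GRing.Theory Num.Theory numFieldNormedType.Exports.
Local Open Scope classical_set_scope.
Local Open Scope ring_scope.

Section InfoDefs.
Variable R : realType.

Definition is_pmf (T : finType) (p : T -> R) : Prop :=
  (forall t, 0 <= p t) /\ \sum_(t : T) p t = 1.

(* Shannon entropy (natural log; ln 0 = 0 gives the convention 0 ln 0 = 0) *)
Definition ent (T : finType) (p : T -> R) : R := - \sum_(t : T) p t * ln (p t).

Variables X1 X2 Y : finType.

Definition jdist := X1 -> X2 -> Y -> R.

Definition mall (f : jdist) : X1 * X2 * Y -> R := fun u => f u.1.1 u.1.2 u.2.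
Definition m12 (f : jdist) : X1 * X2 -> R := fun u => \sum_(y : Y) f u.1 u.2 y.
Definition m1Y (f : jdist) : X1 * Y -> R := fun u => \sum_(b : X2) f u.1 b u.2.
Definition m2Y (f : jdist) : X2 * Y -> R := fun u => \sum_(a : X1) f a u.1 u.2.
Definition m1 (f : jdist) : X1 -> R := fun a => \sum_(b : X2) \sum_(y : Y) f a b y.
Definition m2 (f : jdist) : X2 -> R := fun b => \sum_(a : X1) \sum_(y : Y) f a b y.
Definition mY (f : jdist) : Y -> R := fun y => \sum_(a : X1) \sum_(b : X2) f a b y.

Definition I_1_2 (f : jdist) : R := ent (m1 f) + ent (m2 f) - ent (m12 f).
Definition I_1_Y (f : jdist) : R := ent (m1 f) + ent (mY f) - ent (m1Y f).
Definition I_2_Y (f : jdist) : R := ent (m2 f) + ent (mY f) - ent (m2Y f).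
Definition I_1_Y_g2 (f : jdist) : R :=
  ent (m12 f) + ent (m2Y f) - ent (mall f) - ent (m2 f).
Definition I_2_Y_g1 (f : jdist) : R :=
  ent (m12 f) + ent (m1Y f) - ent (mall f) - ent (m1 f).
Definition I_12_Y (f : jdist) : R := ent (m12 f) + ent (mY f) - ent (mall f).
Definition I_1_2Y (f : jdist) : R := ent (m1 f) + ent (m2Y f) - ent (mall f).

Definition Eq (q : X1 -> X2 -> Y -> R) (f : jdist) : R :=
  \sum_(a : X1) \sum_(b : X2) \sum_(y : Y) f a b y * q a b y.

Definition pos_part (t : R) : R := Num.max 0 t.

(* min over a set of distributions, as an extended real (min of empty set = +oo) *)
Definition emin (D : set jdist) (g : jdist -> R) : \bar R :=
  ereal_inf [set (g f)%:E | f in D].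

Definition elt (x : R) (e : \bar R) : Prop := (x%:E < e)%E.
Definition ele (x : R) (e : \bar R) : Prop := (x%:E <= e)%E.

Definition is_channel (W : X1 -> X2 -> Y -> R) : Prop :=
  forall a b, is_pmf (W a b).

Variables (W : X1 -> X2 -> Y -> R) (q : X1 -> X2 -> Y -> R).

Definition Pprod (p1 : X1 -> R) (p2 : X2 -> R) : jdist :=
  fun a b y => p1 a * p2 b * W a b y.

Definition D1 (P : jdist) : set jdist :=
  [set f | is_pmf (mall f) /\ (forall a, m1 f a = m1 P a) /\
           (forall u, m2Y f u = m2Y P u) /\ Eq q P <= Eq q f].
Definition D2 (P : jdist) : set jdist :=
  [set f | is_pmf (mall f) /\ (forall b, m2 f b = m2 P b) /\
           (forall u, m1Y f u = m1Y P u) /\ Eq q P <= Eq q f].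
Definition D0 (P : jdist) (R1 R2 : R) : set jdist :=
  [set f | is_pmf (mall f) /\ (forall a, m1 f a = m1 P a) /\
           (forall b, m2 f b = m2 P b) /\ (forall y, mY f y = mY P y) /\
           Eq q P <= Eq q f /\ I_1_Y f <= R1 /\ I_2_Y f <= R2].

Definition RLM_P (p1 : X1 -> R) (p2 : X2 -> R) : set (R * R) :=
  let P := Pprod p1 p2 in
  [set r | 0 <= r.1 /\ 0 <= r.2 /\
     elt r.1 (emin (D1 P) (fun f => I_1_Y_g2 f + I_1_2 f)) /\
     elt r.2 (emin (D2 P) (fun f => I_2_Y_g1 f + I_1_2 f)) /\
     elt (r.1 + r.2) (emin (D0 P r.1 r.2) (fun f => I_12_Y f + I_1_2 f))].

Definition Pjoint (p12 : X1 -> X2 -> R) : jdist := fun a b y => p12 a b * W a b y.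

Definition G (P : jdist) : set jdist :=
  [set f | is_pmf (mall f) /\ (forall u, m12 f u = m12 P u) /\ Eq q P <= Eq q f].
Definition L1 (P : jdist) : set jdist :=
  [set f | G P f /\ forall u, m2Y f u = m2Y P u].
Definition L2 (P : jdist) : set jdist :=
  [set f | G P f /\ forall u, m1Y f u = m1Y P u].
Definition L0 (P : jdist) : set jdist :=
  [set f | G P f /\ forall y, mY f y = mY P y].

Definition R1' (P : jdist) : \bar R := emin (L1 P) I_1_2Y.
Definition R2' (P : jdist) : \bar R := emin (L2 P) I_2_Y_g1.
Definition R1'' (P : jdist) (R2 : R) : \bar R :=
  emin (L0 P) (fun f => I_1_Y f + pos_part (I_2_Y_g1 f - R2)).
Definition R2'' (P : jdist) (R1 : R) : \bar R :=
  emin (L0 P) (fun f => I_2_Y f - I_1_2 f + pos_part (I_1_2Y f - R1)).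

Definition Rcog_P (p12 : X1 -> X2 -> R) : set (R * R) :=
  let P := Pjoint p12 in
  [set r | 0 <= r.2 /\ exists R1a R1b : R,
     0 <= R1a /\ 0 <= R1b /\ r.1 = R1a + R1b /\
     ele R1a (R1' P) /\ ele (R1b + r.2) (R2' P) /\
     (ele R1a (R1'' P (R1b + r.2)) \/ ele (R1b + r.2) (R2'' P R1a))].

End InfoDefs.

Definition conv2 (R : realType) (A : set (R * R)) : set (R * R) :=
  [set z | exists (n : nat) (w : 'I_n -> R) (a : 'I_n -> R * R),
     (forall i, 0 <= w i) /\ \sum_(i < n) w i = 1 /\ (forall i, A (a i)) /\
     z = (\sum_(i < n) w i * (a i).1, \sum_(i < n) w i * (a i).2)].

Definition R_LM (R : realType) (X1 X2 Y : finType)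
  (W q : X1 -> X2 -> Y -> R) : set (R * R) :=
  @closure (R * R)%type (conv2 (\bigcup_(p in [set p : (X1 -> R) * (X2 -> R) |
                                   is_pmf p.1 /\ is_pmf p.2])
                     RLM_P W q p.1 p.2)).

Definition R_cog_bin (R : realType) (X1 X2 Y : finType)
  (W q : X1 -> X2 -> Y -> R) : set (R * R) :=
  @closure (R * R)%type (conv2 (\bigcup_(p in [set p : X1 -> X2 -> R |
                                   is_pmf (fun u : X1 * X2 => p u.1 u.2)])
                     Rcog_P W q p)).

(* Main.v *)
Require Import Defs.
From HB Require Import structures.
From mathcomp Require Import all_boot all_order all_algebra.
From mathcomp Require Import all_classical all_reals all_analysis.
From mathcomp Require Import ring lra.
Set Implicit Arguments. Unset Strict Implicit. Unset Printing Implicit Defensive.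
Import Order.TTheory GRing.Theory Num.Theory.
Local Open Scope classical_set_scope.
Local Open Scope ring_scope.

Lemma ln_key (R : realType) (x z : R) : 0 <= x -> 0 <= z -> (0 < x -> 0 < z) ->
  x - z <= x * ln x - x * ln z.
Proof.
move=> x0 z0 xz; have [->|xp] := eqVneq x 0; first by rewrite !mul0r subrr sub0r oppr_le0.
have xgt : 0 < x by rewrite lt0r xp.
have zgt := xz xgt.
have := expR_ge1Dx (ln (z / x)).
rewrite lnK; last by rewrite posrE divr_gt0.
rewrite ln_div ?posrE // => h.
have : x * (1 + (ln z - ln x)) <= x * (z / x) by rewrite ler_pM2l.
rewrite mulrCA divff ?mulr1 //; lra.
Qed.

Lemma sum_lin (R : realType) (T : finType) (F G : T -> R) (l : R) :
  \sum_t (l * F t + (1 - l) * G t) = l * \sum_t F t + (1 - l) * \sum_t G t.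
Proof. by rewrite big_split -!mulr_sumr. Qed.

Lemma ent_concave (R : realType) (T : finType) (p q : T -> R) (l : R) :
  0 < l < 1 -> (forall t, 0 <= p t) -> (forall t, 0 <= q t) ->
  l * ent p + (1 - l) * ent q <= ent (fun t => l * p t + (1 - l) * q t).
Proof.
move=> /andP[l0 l1] p0 q0; rewrite /ent mulrN mulrN -opprD lerN2 -sum_lin.
apply: ler_sum => t _.
set w := l * p t + (1 - l) * q t.
have l1' : 0 < 1 - l by rewrite subr_gt0.
have w0 : 0 <= w by rewrite addr_ge0 // mulr_ge0 // ltW.
have hp := @ln_key R (p t) w (p0 t) w0.
have hq := @ln_key R (q t) w (q0 t) w0.
have hp' : p t - w <= p t * ln (p t) - p t * ln w.
  apply: hp => pp; rewrite /w ltr_pwDl ?mulr_gt0 // mulr_ge0 // ltW //.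
have hq' : q t - w <= q t * ln (q t) - q t * ln w.
  apply: hq => qp; rewrite /w ltr_pwDr ?mulr_gt0 // mulr_ge0 // ltW //.
have e : w * ln w = l * (p t * ln w) + (1 - l) * (q t * ln w) by rewrite /w; ring.
rewrite e.
have : 0 <= l * (p t * ln (p t) - p t * ln w - (p t - w)) + (1 - l) * (q t * ln (q t) - q t * ln w - (q t - w)).
  by apply: addr_ge0; apply: mulr_ge0; rewrite ?subr_ge0 // ltW.
have : l * (p t - w) + (1 - l) * (q t - w) = 0 by rewrite /w; ring.
lra.
Qed.

Lemma sum_ge_term (R : realType) (T : finType) (F : T -> R) i :
  (forall j, 0 <= F j) -> F i <= \sum_j F j.
Proof. by move=> h; rewrite (bigD1 i) //= lerDl sumr_ge0. Qed.


Lemma cmi_pt (R : realType) (x a1 a2 m : R) : 0 <= x -> 0 <= a1 -> 0 <= a2 -> 0 <= m ->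
  (0 < x -> [/\ 0 < a1, 0 < a2 & 0 < m]) ->
  x - a1 * a2 / m <= x * ln x + x * ln m - x * ln a1 - x * ln a2.
Proof.
move=> x0 a10 a20 m0 h.
have [->|xp] := eqVneq x 0.
  rewrite !mul0r !addr0 !subr0 sub0r oppr_le0; by rewrite divr_ge0 // mulr_ge0.
have xg : 0 < x by rewrite lt0r xp.
case: (h xg) => p1 p2 pm.
have z0 : 0 < a1 * a2 / m by rewrite divr_gt0 // mulr_gt0.
have := @ln_key R x (a1 * a2 / m) x0 (ltW z0) (fun _ => z0).
rewrite ln_div ?posrE ?mulr_gt0 // lnM ?posrE //.
move=> H; apply: (le_trans H); rewrite le_eqVlt; apply/orP; left; apply/eqP; ring.
Qed.

Lemma pairsum (R : realType) (A B : finType) (G : A * B -> R) :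
  \sum_(u : A * B) G u = \sum_a \sum_b G (a, b).
Proof. by rewrite pair_bigA; apply: eq_bigr => -[]. Qed.

Section S.
Variables (R : realType) (X1 X2 Y : finType).
Implicit Types f g : jdist R X1 X2 Y.

Lemma sum3 (F : X1 * X2 * Y -> R) :
  \sum_u F u = \sum_a \sum_b \sum_y F (a, b, y).
Proof. rewrite pairsum pairsum; apply: eq_bigr => a _; by apply: eq_bigr. Qed.

Lemma nonneg_pmf f : is_pmf (mall f) -> forall a b y, 0 <= f a b y.
Proof. by case=> h _ a b y; exact: (h (a, b, y)). Qed.

Lemma sum_all f : is_pmf (mall f) -> \sum_a \sum_b \sum_y f a b y = 1.
Proof. by case=> _ h; rewrite -h sum3. Qed.

Lemma entall f : \sum_u mall f u * ln (mall f u) =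
  \sum_a \sum_b \sum_y f a b y * ln (f a b y).
Proof. by rewrite sum3. Qed.

Lemma ent1Y f : \sum_u m1Y f u * ln (m1Y f u) =
  \sum_a \sum_b \sum_y f a b y * ln (m1Y f (a, y)).
Proof.
rewrite pairsum; apply: eq_bigr => a _.
rewrite exchange_big; apply: eq_bigr => y _; by rewrite /m1Y /= mulr_suml.
Qed.

Lemma ent2Y f : \sum_u m2Y f u * ln (m2Y f u) =
  \sum_a \sum_b \sum_y f a b y * ln (m2Y f (b, y)).
Proof.
rewrite pairsum.
transitivity (\sum_b \sum_a \sum_y f a b y * ln (m2Y f (b, y))); last by rewrite exchange_big.
apply: eq_bigr => b _; rewrite exchange_big; apply: eq_bigr => y _.
by rewrite /m2Y /= mulr_suml.
Qed.

Lemma entY f : \sum_u mY f u * ln (mY f u) =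
  \sum_a \sum_b \sum_y f a b y * ln (mY f y).
Proof.
transitivity (\sum_y \sum_a \sum_b f a b y * ln (mY f y)).
  by apply: eq_bigr => y _; rewrite /mY mulr_suml; apply: eq_bigr => a _; rewrite mulr_suml.
rewrite exchange_big; apply: eq_bigr => a _; by rewrite exchange_big.
Qed.

Lemma sumY f : \sum_y mY f y = \sum_a \sum_b \sum_y f a b y.
Proof. rewrite /mY exchange_big; apply: eq_bigr => a _; by rewrite exchange_big. Qed.

Lemma cmi_ge0 f : is_pmf (mall f) ->
  0 <= ent (m1Y f) + ent (m2Y f) - ent (mall f) - ent (mY f).
Proof.
move=> hp; have f0 := nonneg_pmf hp.
have m1Y0 u : 0 <= m1Y f u by apply: sumr_ge0 => *; exact: f0.
have m2Y0 u : 0 <= m2Y f u by apply: sumr_ge0 => *; exact: f0.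
have mY0 u : 0 <= mY f u by apply: sumr_ge0 => *; apply: sumr_ge0 => *; exact: f0.
have e : ent (m1Y f) + ent (m2Y f) - ent (mall f) - ent (mY f) =
  \sum_a \sum_b \sum_y (f a b y * ln (f a b y) + f a b y * ln (mY f y)
      - f a b y * ln (m1Y f (a, y)) - f a b y * ln (m2Y f (b, y))).
  rewrite /ent entall ent1Y ent2Y entY.
  rewrite -!sumrN -!big_split /=; apply: eq_bigr => a _.
  rewrite -!sumrN -!big_split /=; apply: eq_bigr => b _.
  rewrite -!sumrN -!big_split /=; apply: eq_bigr => y _.
  ring.
rewrite e.
apply: (@le_trans _ _ (\sum_a \sum_b \sum_y (f a b y - m1Y f (a, y) * m2Y f (b, y) / mY f y))).
  under eq_bigr => a _ do under eq_bigr => b _ do rewrite sumrB.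
  under eq_bigr => a _ do rewrite sumrB.
  rewrite sumrB subr_ge0.
  have -> : \sum_a \sum_b \sum_y f a b y = 1 by exact: sum_all.
  have -> : \sum_a \sum_b \sum_y (m1Y f (a, y) * m2Y f (b, y) / mY f y) = \sum_y mY f y.
    transitivity (\sum_y \sum_a \sum_b (m1Y f (a, y) * m2Y f (b, y) / mY f y)).
      rewrite [RHS]exchange_big; apply: eq_bigr => a _; by rewrite exchange_big.
    apply: eq_bigr => y _.
    have e2 : \sum_b m2Y f (b, y) = mY f y by rewrite /m2Y /mY /= exchange_big.
    transitivity ((\sum_a m1Y f (a, y)) * (\sum_b m2Y f (b, y)) / mY f y).
      rewrite mulr_suml mulr_suml; apply: eq_bigr => a _; by rewrite mulr_sumr mulr_suml.
    rewrite e2.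
    have -> : \sum_a m1Y f (a, y) = mY f y by [].
    have [->|nz] := eqVneq (mY f y) 0; first by rewrite !mul0r.
    by rewrite mulfK.
  by rewrite sumY sum_all.
apply: ler_sum => a _; apply: ler_sum => b _; apply: ler_sum => y _.
apply: cmi_pt; [exact: f0|exact: m1Y0|exact: m2Y0|exact: mY0|].
move=> fp; split.
- apply: (lt_le_trans fp); apply: (@sum_ge_term _ _ (fun b => f a b y) b) => j; exact: f0.
- apply: (lt_le_trans fp); apply: (@sum_ge_term _ _ (fun a => f a b y) a) => j; exact: f0.
- apply: (lt_le_trans fp); apply: (le_trans (@sum_ge_term _ _ (fun b => f a b y) b _)).
    move=> j; exact: f0.
  apply: (@sum_ge_term _ _ (fun a => \sum_b f a b y) a) => j.
  apply: sumr_ge0 => k _; exact: f0.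
Qed.
End S.


Section T.
Variables (R : realType) (X1 X2 Y : finType).
Implicit Types f g : jdist R X1 X2 Y.

Definition mix (l : R) f g : jdist R X1 X2 Y := fun a b y => l * f a b y + (1 - l) * g a b y.

Lemma mix_same (T : Type) (p : T -> R) l : (fun t => l * p t + (1 - l) * p t) = p.
Proof. by apply: funext => t; ring. Qed.

Lemma m1_mix l f g : m1 (mix l f g) = fun a => l * m1 f a + (1 - l) * m1 g a.
Proof. apply: funext => a; rewrite /m1 -sum_lin; apply: eq_bigr => b _; exact: sum_lin. Qed.
Lemma m2_mix l f g : m2 (mix l f g) = fun b => l * m2 f b + (1 - l) * m2 g b.
Proof. apply: funext => b; rewrite /m2 -sum_lin; apply: eq_bigr => a _; exact: sum_lin. Qed.
Lemma mY_mix l f g : mY (mix l f g) = fun y => l * mY f y + (1 - l) * mY g y.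
Proof. apply: funext => y; rewrite /mY -sum_lin; apply: eq_bigr => a _; exact: sum_lin. Qed.
Lemma m12_mix l f g : m12 (mix l f g) = fun u => l * m12 f u + (1 - l) * m12 g u.
Proof. apply: funext => u; exact: sum_lin. Qed.
Lemma m1Y_mix l f g : m1Y (mix l f g) = fun u => l * m1Y f u + (1 - l) * m1Y g u.
Proof. apply: funext => u; exact: sum_lin. Qed.
Lemma m2Y_mix l f g : m2Y (mix l f g) = fun u => l * m2Y f u + (1 - l) * m2Y g u.
Proof. apply: funext => u; exact: sum_lin. Qed.
Lemma mall_mix l f g : mall (mix l f g) = fun u => l * mall f u + (1 - l) * mall g u.
Proof. by []. Qed.
Lemma Eq_mix (q : X1 -> X2 -> Y -> R) l f g : Eq q (mix l f g) = l * Eq q f + (1 - l) * Eq q g.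
Proof.
rewrite /Eq -sum_lin; apply: eq_bigr => a _; rewrite -sum_lin; apply: eq_bigr => b _.
rewrite -sum_lin; apply: eq_bigr => y _; rewrite /mix; ring.
Qed.

Lemma pmf_mix l f g : 0 < l < 1 -> is_pmf (mall f) -> is_pmf (mall g) -> is_pmf (mall (mix l f g)).
Proof.
move=> /andP[l0 l1] [f0 f1] [g0 g1]; split.
  move=> t; rewrite mall_mix; apply: addr_ge0; apply: mulr_ge0 => //; [exact: ltW|].
  by rewrite subr_ge0 ltW.
by rewrite mall_mix sum_lin f1 g1; ring.
Qed.

Lemma m1Y0 f : is_pmf (mall f) -> forall u, 0 <= m1Y f u.
Proof. move=> h u; apply: sumr_ge0 => *; exact: nonneg_pmf. Qed.
Lemma m2Y0 f : is_pmf (mall f) -> forall u, 0 <= m2Y f u.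
Proof. move=> h u; apply: sumr_ge0 => *; exact: nonneg_pmf. Qed.
Lemma mall0 f : is_pmf (mall f) -> forall u, 0 <= mall f u.
Proof. by case. Qed.

Lemma I1Y_mix l f g : 0 < l < 1 -> is_pmf (mall f) -> is_pmf (mall g) ->
  m1 f = m1 g -> mY f = mY g ->
  I_1_Y (mix l f g) <= l * I_1_Y f + (1 - l) * I_1_Y g.
Proof.
move=> hl hf hg e1 eY; rewrite /I_1_Y m1_mix mY_mix m1Y_mix -e1 -eY !mix_same.
have := ent_concave hl (m1Y0 hf) (m1Y0 hg); lra.
Qed.
Lemma I2Y_mix l f g : 0 < l < 1 -> is_pmf (mall f) -> is_pmf (mall g) ->
  m2 f = m2 g -> mY f = mY g ->
  I_2_Y (mix l f g) <= l * I_2_Y f + (1 - l) * I_2_Y g.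
Proof.
move=> hl hf hg e1 eY; rewrite /I_2_Y m2_mix mY_mix m2Y_mix -e1 -eY !mix_same.
have := ent_concave hl (m2Y0 hf) (m2Y0 hg); lra.
Qed.
Lemma I12Y_mix l f g : 0 < l < 1 -> is_pmf (mall f) -> is_pmf (mall g) ->
  m12 f = m12 g -> mY f = mY g ->
  I_12_Y (mix l f g) <= l * I_12_Y f + (1 - l) * I_12_Y g.
Proof.
move=> hl hf hg e1 eY; rewrite /I_12_Y m12_mix mY_mix mall_mix -e1 -eY !mix_same.
have := ent_concave hl (mall0 hf) (mall0 hg); lra.
Qed.

Lemma m1_of12 f g : m12 f = m12 g -> m1 f = m1 g.
Proof. move=> e; apply: funext => a; apply: eq_bigr => b _; exact: (congr1 (fun F => F (a, b)) e). Qed.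
Lemma m2_of12 f g : m12 f = m12 g -> m2 f = m2 g.
Proof.
move=> e; apply: funext => b; rewrite /m2; apply: eq_bigr => a _.
exact: (congr1 (fun F => F (a, b)) e).
Qed.
Lemma I12_of12 f g : m12 f = m12 g -> I_1_2 f = I_1_2 g.
Proof. by move=> e; rewrite /I_1_2 (m1_of12 e) (m2_of12 e) e. Qed.
Lemma mY_of1Y f g : (forall u, m1Y f u = m1Y g u) -> mY f = mY g.
Proof. move=> e; apply: funext => y; apply: eq_bigr => a _; exact: (e (a, y)). Qed.

Lemma ent_prod (p1 : X1 -> R) (p2 : X2 -> R) : is_pmf p1 -> is_pmf p2 ->
  ent (fun u : X1 * X2 => p1 u.1 * p2 u.2) = ent p1 + ent p2.
Proof.
move=> [p10 p11] [p20 p21]; rewrite /ent pairsum -opprD; congr (- _).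
transitivity (\sum_a \sum_b (p1 a * ln (p1 a) * p2 b + p1 a * (p2 b * ln (p2 b)))).
  apply: eq_bigr => a _; apply: eq_bigr => b _ /=.
  have [->|n1] := eqVneq (p1 a) 0; first by rewrite ?(mulr0, mul0r, addr0, add0r).
  have [->|n2] := eqVneq (p2 b) 0; first by rewrite ?(mulr0, mul0r, addr0, add0r).
  have g1 : 0 < p1 a by rewrite lt0r n1 p10.
  have g2 : 0 < p2 b by rewrite lt0r n2 p20.
  rewrite lnM ?posrE //; ring.
under eq_bigr => a _ do rewrite big_split /= -mulr_sumr -mulr_sumr p21 mulr1.
by rewrite big_split /= -mulr_suml p11 mul1r.
Qed.

Variables (W q : X1 -> X2 -> Y -> R).

Lemma m12P (p1 : X1 -> R) (p2 : X2 -> R) : is_channel W ->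
  m12 (Pprod W p1 p2) = fun u => p1 u.1 * p2 u.2.
Proof.
move=> hW; apply: funext => u; rewrite /m12 /Pprod -mulr_sumr.
by case: (hW u.1 u.2) => _ ->; rewrite mulr1.
Qed.

Lemma I12P (p1 : X1 -> R) (p2 : X2 -> R) : is_channel W -> is_pmf p1 -> is_pmf p2 ->
  I_1_2 (Pprod W p1 p2) = 0.
Proof.
move=> hW h1 h2.
have e1 : m1 (Pprod W p1 p2) = p1.
  apply: funext => a; rewrite /m1.
  transitivity (\sum_b m12 (Pprod W p1 p2) (a, b)) => //.
  rewrite m12P //= -mulr_sumr; by case: h2 => _ ->; rewrite mulr1.
have e2 : m2 (Pprod W p1 p2) = p2.
  apply: funext => b; rewrite /m2.
  transitivity (\sum_a m12 (Pprod W p1 p2) (a, b)) => //.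
  rewrite m12P //= -mulr_suml; by case: h1 => _ ->; rewrite mul1r.
rewrite /I_1_2 e1 e2 m12P // ent_prod //; ring.
Qed.

End T.


Section U.
Variables (R : realType) (X1 X2 Y : finType).
Implicit Types f g : jdist R X1 X2 Y.

Lemma emin_le (A B : set (jdist R X1 X2 Y)) gA gB :
  (forall f, A f -> B f /\ gB f <= gA f) -> (emin B gB <= emin A gA)%E.
Proof.
move=> h; rewrite leNgt; apply/negP => /ereal_inf_lt -[y [f Af <-] lt].
have [Bf le] := h f Af.
have : (emin B gB <= (gB f)%:E)%E by apply: ereal_inf_lbound; exists f.
move=> le2; have := lt_le_trans lt le2; rewrite lte_fin => lt3.
by have := lt_le_trans lt3 le; rewrite ltxx.
Qed.

Lemma pos_ge0 (t : R) : 0 <= pos_part t.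
Proof. by rewrite /pos_part le_max lexx. Qed.
Lemma pos_ge (t : R) : t <= pos_part t.
Proof. by rewrite /pos_part le_max lexx orbT. Qed.

Variables (W q : X1 -> X2 -> Y -> R).

Lemma core (p1 : X1 -> R) (p2 : X2 -> R) r : is_channel W -> is_pmf p1 -> is_pmf p2 ->
  RLM_P W q p1 p2 r -> Rcog_P W q (fun a b => p1 a * p2 b) r.
Proof.
move=> hW hp1 hp2.
case: r => R1 R2; rewrite /RLM_P /Rcog_P /=.
set P := Pprod W p1 p2.
change (Pjoint W (fun a b => p1 a * p2 b)) with P.
move=> [h01 [h02 [H1 [H2 H3]]]].
have IP : I_1_2 P = 0 by exact: I12P.
have Gm12 : forall f, G q P f -> m12 f = m12 P.
  by move=> f [_ [e _]]; apply: funext.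
have GI : forall f, G q P f -> I_1_2 f = 0.
  by move=> f hf; rewrite (I12_of12 (Gm12 f hf)).
split => //; exists R1, 0; split => //; split => //; split; first by rewrite addr0.
split.
  rewrite /ele /R1'; apply: ltW; apply: (lt_le_trans H1); apply: emin_le.
  move=> f [[hf [e12 eq]] e2Y]; split.
    split => //; split; last by split.
    move=> a; by rewrite (m1_of12 (Gm12 f (conj hf (conj e12 eq)))).
  rewrite /I_1_2Y /I_1_Y_g2 /I_1_2; lra.
split.
  rewrite add0r /ele /R2'; apply: ltW; apply: (lt_le_trans H2); apply: emin_le.
  move=> f [[hf [e12 eq]] e1Y]; split.
    split => //; split; last by split.
    move=> b; by rewrite (m2_of12 (Gm12 f (conj hf (conj e12 eq)))).
  by rewrite (GI f (conj hf (conj e12 eq))) addr0.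
rewrite add0r.
have inD0 : forall h, is_pmf (mall h) -> m12 h = m12 P -> mY h = mY P -> Eq q P <= Eq q h ->
    I_1_Y h <= R1 -> I_2_Y h <= R2 -> R1 + R2 < I_12_Y h.
  move=> h hh e12 eY eq i1 i2.
  have hD : D0 q P R1 R2 h.
    split => //; split; first by rewrite (m1_of12 e12).
    split; first by rewrite (m2_of12 e12).
    by split; first by rewrite eY.
  have := lt_le_trans H3 (ereal_inf_lbound (ex_intro2 _ _ h hD erefl)).
  by rewrite lte_fin (I12_of12 e12) IP addr0.
have [A|nA] := pselect (ele R1 (R1'' q P R2)); first by left.
right; rewrite /ele leNgt; apply/negP => lt2.
have : (R1'' q P R2 < R1%:E)%E by rewrite ltNge; apply/negP.
move=> /ereal_inf_lt -[_ [f [[hf [e12f eqf]] eYf] <-]]; rewrite lte_fin => ltf.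
move: lt2 => /ereal_inf_lt -[_ [g [[hg [e12g eqg]] eYg] <-]]; rewrite lte_fin => ltg.
have ef : m12 f = m12 P by apply: funext.
have eg : m12 g = m12 P by apply: funext.
have eYf' : mY f = mY P by apply: funext.
have eYg' : mY g = mY P by apply: funext.
have z1 : I_1_2 f = 0 by rewrite (I12_of12 ef).
have z2 : I_1_2 g = 0 by rewrite (I12_of12 eg).
have cf := cmi_ge0 hf.
have cg := cmi_ge0 hg.
have pf1 := pos_ge0 (I_2_Y_g1 f - R2).
have pf2 := pos_ge (I_2_Y_g1 f - R2).
have pg1 := pos_ge0 (I_1_2Y g - R1).
have pg2 := pos_ge (I_1_2Y g - R1).
have idf : I_12_Y f = I_1_Y f + I_2_Y_g1 f by rewrite /I_12_Y /I_1_Y /I_2_Y_g1; ring.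
have idg : I_12_Y g = I_2_Y g + I_1_2Y g - I_1_2 g
  by rewrite /I_12_Y /I_2_Y /I_1_2Y /I_1_2; ring.
have sf : I_1_Y f + I_2_Y f <= I_12_Y f.
  move: z1 cf; rewrite /I_1_2 /I_1_Y /I_2_Y /I_12_Y; lra.
have sg : I_1_Y g + I_2_Y g <= I_12_Y g.
  move: z2 cg; rewrite /I_1_2 /I_1_Y /I_2_Y /I_12_Y; lra.
have a1l : I_1_Y f < R1 by lra.
have cfl : I_12_Y f < R1 + R2 by lra.
have b2l : I_2_Y g < R2 by lra.
have cgl : I_12_Y g < R1 + R2 by lra.
have a2g : R2 < I_2_Y f.
  rewrite ltNge; apply/negP => a2l.
  have := inD0 f hf ef eYf' eqf (ltW a1l) a2l; lra.
have b1g : R1 < I_1_Y g.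
  rewrite ltNge; apply/negP => b1l.
  have := inD0 g hg eg eYg' eqg b1l (ltW b2l); lra.
set a1 := I_1_Y f in a1l sf a2g *.
set b1 := I_1_Y g in b1g sg *.
set l := (b1 - R1) / (b1 - a1).
have d0 : 0 < b1 - a1 by lra.
have el : l * (b1 - a1) = b1 - R1 by rewrite /l divfK // gt_eqF.
have l0 : 0 < l by rewrite /l divr_gt0 // subr_gt0.
have l1 : l < 1 by rewrite /l ltr_pdivrMr // mul1r; lra.
have hl : 0 < l < 1 by rewrite l0 l1.
have l1' : 0 < 1 - l by rewrite subr_gt0.
set h := mix l f g.
have hh : is_pmf (mall h) := pmf_mix hl hf hg.
have e12h : m12 h = m12 P by rewrite /h m12_mix ef eg mix_same.
have eYh : mY h = mY P by rewrite /h mY_mix eYf' eYg' mix_same.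
have efg : m12 f = m12 g by rewrite ef eg.
have eYfg : mY f = mY g by rewrite eYf' eYg'.
have eqh : Eq q P <= Eq q h.
  rewrite /h Eq_mix.
  have u1 : l * Eq q P <= l * Eq q f by rewrite ler_pM2l.
  have u2 : (1 - l) * Eq q P <= (1 - l) * Eq q g by rewrite ler_pM2l.
  have : Eq q P = l * Eq q P + (1 - l) * Eq q P by ring.
  lra.
have i1 := I1Y_mix hl hf hg (m1_of12 efg) eYfg.
have i2 := I2Y_mix hl hf hg (m2_of12 efg) eYfg.
have i3 := I12Y_mix hl hf hg efg eYfg.
rewrite -/a1 -/b1 -/h in i1.
rewrite -/h in i2 i3.
have ea : l * a1 + (1 - l) * b1 = R1.
  have : l * a1 + (1 - l) * b1 = b1 - l * (b1 - a1) by ring.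
  rewrite el; lra.
have k1 : l * (a1 + I_2_Y f) < l * (R1 + R2) by rewrite ltr_pM2l //; lra.
have k2 : (1 - l) * (b1 + I_2_Y g) < (1 - l) * (R1 + R2) by rewrite ltr_pM2l //; lra.
have k3 : l * I_12_Y f < l * (R1 + R2) by rewrite ltr_pM2l.
have k4 : (1 - l) * I_12_Y g < (1 - l) * (R1 + R2) by rewrite ltr_pM2l.
have hI1 : I_1_Y h <= R1 by lra.
have hI2 : I_2_Y h <= R2.
  have : l * (a1 + I_2_Y f) = l * a1 + l * I_2_Y f by ring.
  have : (1 - l) * (b1 + I_2_Y g) = (1 - l) * b1 + (1 - l) * I_2_Y g by ring.
  have : l * (R1 + R2) + (1 - l) * (R1 + R2) = R1 + R2 by ring.
  lra.
have := inD0 h hh e12h eYh eqh hI1 hI2.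
have : l * (R1 + R2) + (1 - l) * (R1 + R2) = R1 + R2 by ring.
lra.
Qed.

End U.

Import numFieldNormedType.Exports.
Local Open Scope classical_set_scope.

Theorem lemma2 (R : realType) (X1 X2 Y : finType)
  (W q : X1 -> X2 -> Y -> R) :
  is_channel W -> R_LM W q `<=` R_cog_bin W q.
Proof.
move=> hW; rewrite /R_LM /R_cog_bin; apply: closureS => z [n [w [a [hw [hs [hA ->]]]]]].
exists n, w, a; split => //; split => //; split => // i.
have [p [hp1 hp2] hr] := hA i.
exists (fun x y => p.1 x * p.2 y); last exact: core.
case: hp1 => p10 p11; case: hp2 => p20 p21; split.
  by move=> u; rewrite /= mulr_ge0.
rewrite /= pairsum /=.
under eq_bigr => x _ do rewrite -mulr_sumr p21 mulr1.
exact: p11.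
Qed.
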